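(* Let $X$ be the circle $\mathbb{S}^1$ or the interval $[0,1]$, and let $f\colon X\to X$ be a homeomorphism. If $\mu$ is a Borel probability measure that is inner-distal with respect to $f$, then $\operatorname{supp}(\mu)\subseteq\Omega(f)$.
   Context: $\mathcal{P}(x)=\{y\colon \inf_{n\in\mathbb{Z}} d(f^n(x),f^n(y))=0\}$; $\mu$ is inner-distal w.r.t. $f$ if $\mu(\operatorname{Int}\mathcal{P}(x))=0$ for all $x$. $\operatorname{supp}(\mu)=\{x\colon \mu(U)>0$ for every neighborhood $U$ of $x\}$. The non-wandering set $\Omega(f)$ is the set of $x$ such that $U\cap\bigcup_{n\ge1}f^n(U)\neq\emptyset$ for every neighborhood $U$ of $x$. *)

(* Defs.v *)
From HB Require Import structures.
From mathcomp Require Import all_boot all_order all_algebra.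
From mathcomp Require Import all_classical all_reals all_analysis.
Set Implicit Arguments. Unset Strict Implicit. Unset Printing Implicit Defensive.
Import Order.TTheory GRing.Theory Num.Theory.
Import numFieldNormedType.Exports.
Local Open Scope classical_set_scope.
Local Open Scope ring_scope.

(* Both spaces are realised as compact subsets of the plane R x R, with the
   Euclidean metric (inducing the usual topology on each). *)
Notation pt R := (R * R)%type.
Section Defs.
Variable R : realType.
Local Notation pt := (R * R)%type.

Definition edist (p q : pt) : R :=
  Num.sqrt ((p.1 - q.1) ^+ 2 + (p.2 - q.2) ^+ 2).

Definition circle : set pt := [set p | p.1 ^+ 2 + p.2 ^+ 2 = 1].
Definition unit_interval : set pt := [set p | 0 <= p.1 <= 1 /\ p.2 = 0].

Definition rel_interior (X A : set pt) : set pt :=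
  [set x | X x /\ A x /\ exists2 e : R, 0 < e &
     forall y, X y -> edist x y < e -> A y].

Definition rel_open (X A : set pt) : Prop := A `<=` X /\ A = rel_interior X A.

Definition homeomorphism_on (X : set pt) (f g : pt -> pt) : Prop :=
  [/\ (forall x, X x -> X (f x)),
      (forall x, X x -> X (g x)),
      (forall x, X x -> g (f x) = x),
      (forall x, X x -> f (g x) = x) &
      ({within X, continuous f}) /\ ({within X, continuous g})].

(* integer iterates f^n, with f^(-k) = g^k for the inverse g *)
Definition iterz (f g : pt -> pt) (n : int) (x : pt) : pt :=
  match n with
  | Posz k => iter k f x
  | Negz k => iter k.+1 g x
  end.

Definition proximal_cell (X : set pt) (f g : pt -> pt) (x : pt) : set pt :=
  [set y | X y /\ forall e : R, 0 < e ->
     exists n : int, edist (iterz f g n x) (iterz f g n y) < e].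

Definition inner_distal (X : set pt) (f g : pt -> pt)
  (mu : set pt -> \bar R) : Prop :=
  forall x, X x -> mu (rel_interior X (proximal_cell X f g x)) = 0%E.

Definition measure_support (X : set pt) (mu : set pt -> \bar R) : set pt :=
  [set x | X x /\ forall U, rel_open X U -> U x -> (0 < mu U)%E].

Definition nonwandering (X : set pt) (f : pt -> pt) : set pt :=
  [set x | X x /\ forall U, U `<=` X -> rel_interior X U x ->
     exists n : nat, (1 <= n)%N /\ exists2 y, U y & U (iter n f y)].
End Defs.

(* Main.v *)
Require Import Defs.
From HB Require Import structures.
From mathcomp Require Import all_boot all_order all_algebra.
From mathcomp Require Import all_classical all_reals all_analysis.
From mathcomp Require Import lra ring.
Import Order.TTheory GRing.Theory Num.Theory.
Import numFieldNormedType.Exports.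
Local Open Scope classical_set_scope.
Local Open Scope ring_scope.

Lemma wcomp {T U V : topologicalType} (A : set T) (B : set U) (G : T -> U) (F : U -> V):
 (forall a, A a -> B (G a)) -> {within A, continuous G} -> {within B, continuous F} ->
 {within A, continuous (F \o G)}.
Proof.
move=> AB /subspace_continuousP cG /subspace_continuousP cF.
apply/subspace_continuousP => x Ax.
have BG := AB _ Ax.
have hG := cG x Ax; have hF := cF (G x) BG.
move=> P /hF; rewrite /= !nbhs_simpl withinE => -[Q nQ QE].
have := hG Q nQ.
rewrite /= !nbhs_simpl /within /=.
move=> h; near=> y => Ay.
have : (Q `&` B) (G y) by split; [exact: (near h y) | exact: AB].
by rewrite -QE => -[].
Unshelve. all: by end_near.
Qed.

Section S.
Variable R : realType.

Definition lin (a b s : R) : R := a + s * (b - a).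

Lemma lin_cont (a b : R) : continuous (lin a b).
Proof.
move=> s; rewrite /lin.
apply: cvgD; first exact: cvg_cst.
apply: cvgM; [exact: cvg_id | exact: cvg_cst].
Qed.

Definition nrm (x z : pt R) (s : R) : R :=
  Num.sqrt (lin x.1 z.1 s ^+ 2 + lin x.2 z.2 s ^+ 2).

Lemma nrm_cont x z : continuous (nrm x z).
Proof.
move=> s; rewrite /nrm.
apply: (@continuous_comp _ _ _ (fun s => lin x.1 z.1 s ^+ 2 + lin x.2 z.2 s ^+ 2)).
  apply: cvgD; rewrite /GRing.exp /=; apply: cvgM; exact: lin_cont.
exact: sqrt_continuous.
Qed.

Definition gamC (x z : pt R) (s : R) : pt R :=
  (lin x.1 z.1 s / nrm x z s, lin x.2 z.2 s / nrm x z s).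

Lemma gamC_cont x z s : nrm x z s != 0 -> {for s, continuous (gamC x z)}.
Proof.
move=> hn; rewrite /gamC.
have h1 : (fun s => lin x.1 z.1 s / nrm x z s) @ s --> lin x.1 z.1 s / nrm x z s.
  apply: cvgM; first exact: lin_cont.
  apply: cvgV => //; exact: nrm_cont.
have h2 : (fun s => lin x.2 z.2 s / nrm x z s) @ s --> lin x.2 z.2 s / nrm x z s.
  apply: cvgM; first exact: lin_cont.
  apply: cvgV => //; exact: nrm_cont.
exact: (cvg_pair h1 h2).
Qed.

Definition gamI (x z : pt R) (s : R) : pt R := (lin x.1 z.1 s, lin x.2 z.2 s).
Lemma gamI_cont x z : continuous (gamI x z).
Proof. move=> s; exact: (cvg_pair (lin_cont _ _ s) (lin_cont _ _ s)). Qed.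

Lemma fst_cont : continuous (fun p : pt R => p.1).
Proof. move=> p; exact: cvg_fst. Qed.
Lemma snd_cont : continuous (fun p : pt R => p.2).
Proof. move=> p; exact: cvg_snd. Qed.


Definition sqd (p q : pt R) : R := (p.1 - q.1) ^+ 2 + (p.2 - q.2) ^+ 2.

Lemma sqd_ge0 p q : 0 <= sqd p q.
Proof. by rewrite /sqd addr_ge0 // sqr_ge0. Qed.

Lemma edist_lt (p q : pt R) r : 0 < r -> (Defs.edist p q < r) = (sqd p q < r ^+ 2).
Proof.
move=> hr; rewrite /Defs.edist -/(sqd p q).
rewrite -{1}(ger0_norm (ltW hr)) -sqrtr_sqr ltr_sqrt //.
by rewrite exprn_gt0.
Qed.

Lemma edist_tri (p q r : pt R) e : 0 < e -> Defs.edist p q < e / 2 -> Defs.edist q r < e / 2 ->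
  Defs.edist p r < e.
Proof.
move=> he; have he2 : 0 < e / 2 by rewrite divr_gt0.
rewrite !edist_lt // /sqd => h1 h2.
have : (p.1 - r.1) ^+ 2 + (p.2 - r.2) ^+ 2 <=
  2 * ((p.1 - q.1) ^+ 2 + (p.2 - q.2) ^+ 2) + 2 * ((q.1 - r.1) ^+ 2 + (q.2 - r.2) ^+ 2).
  rewrite -subr_ge0.
  have -> : 2 * ((p.1 - q.1) ^+ 2 + (p.2 - q.2) ^+ 2) + 2 * ((q.1 - r.1) ^+ 2 + (q.2 - r.2) ^+ 2)
    - ((p.1 - r.1) ^+ 2 + (p.2 - r.2) ^+ 2) =
    (p.1 - 2 * q.1 + r.1) ^+ 2 + (p.2 - 2 * q.2 + r.2) ^+ 2 by ring.
  by rewrite addr_ge0 // sqr_ge0.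
have -> : e ^+ 2 = 2 * (e / 2) ^+ 2 + 2 * (e / 2) ^+ 2 by field.
nra.
Qed.

Lemma lin0 a b : lin a b 0 = a.
Proof. by rewrite /lin mul0r addr0. Qed.
Lemma lin1 a b : lin a b 1 = b.
Proof. by rewrite /lin mul1r addrC subrK. Qed.

Lemma circle_path (x z : pt R) d : circle x -> circle z -> 0 < d -> sqd x z < Num.min d 1 ^+ 2 ->
  forall s, 0 <= s <= 1 ->
  [/\ nrm x z s != 0, circle (gamC x z s) & sqd x (gamC x z s) < d ^+ 2].
Proof.
rewrite /circle /= => hx hz hd hw s /andP [s0 s1].
have hm1 : Num.min d 1 <= 1 by rewrite ge_min lexx orbT.
have hmd : Num.min d 1 <= d by rewrite ge_min lexx.
have hm0 : 0 < Num.min d 1 by rewrite lt_min hd ltr01.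
have w1 : sqd x z < 1 by apply: (lt_le_trans hw); rewrite expr_le1 // ltW.
have wd : sqd x z < d ^+ 2 by apply: (lt_le_trans hw); rewrite lerXn2r // ?nnegrE ltW.
set m1 := lin x.1 z.1 s; set m2 := lin x.2 z.2 s.
set M := m1 ^+ 2 + m2 ^+ 2.
set P := x.1 * z.1 + x.2 * z.2.
have hP : sqd x z = 2 - 2 * P.
  transitivity ((x.1 ^+ 2 + x.2 ^+ 2) + (z.1 ^+ 2 + z.2 ^+ 2) - 2 * P).
    by rewrite /sqd /P; ring.
  by rewrite hx hz.
have hM : M = 1 - s * (1 - s) * sqd x z.
  rewrite hP; transitivity ((1 - s) ^+ 2 * (x.1 ^+ 2 + x.2 ^+ 2) + s ^+ 2 * (z.1 ^+ 2 + z.2 ^+ 2)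
     + 2 * s * (1 - s) * P).
    by rewrite /M /m1 /m2 /lin /P; ring.
  by rewrite hx hz; ring.
have M34 : 3 / 4 <= M.
  rewrite hM; have : s * (1 - s) <= 1 / 4.
    rewrite -subr_ge0; have -> : 1 / 4 - s * (1 - s) = (s - 1 / 2) ^+ 2 by field.
    exact: sqr_ge0.
  have : 0 <= s * (1 - s) by rewrite mulr_ge0 // subr_ge0.
  have := sqd_ge0 x z.
  move: (s * (1 - s)) (sqd x z) w1 => t w; nra.
have M1 : M <= 1.
  rewrite hM; have : 0 <= s * (1 - s) by rewrite mulr_ge0 // subr_ge0.
  have := sqd_ge0 x z.
  move: (s * (1 - s)) (sqd x z) => t w; nra.
have M0 : 0 <= M by apply: le_trans M34; lra.
have hN : nrm x z s = Num.sqrt M by [].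
have N2 : nrm x z s ^+ 2 = M by rewrite hN sqr_sqrtr.
have N0 : 0 < nrm x z s by rewrite hN sqrtr_gt0; lra.
have N1 : nrm x z s <= 1 by nra.
set N := nrm x z s in N2 N0 N1 *.
have NN : N != 0 by rewrite gt_eqF.
have xm : x.1 * m1 + x.2 * m2 = 1 - s * sqd x z / 2.
  rewrite hP; transitivity ((1 - s) * (x.1 ^+ 2 + x.2 ^+ 2) + s * P).
    by rewrite /m1 /m2 /lin /P; ring.
  by rewrite hx; field.
split => //.
  rewrite /gamC /= -/m1 -/m2 -/N !expr_div_n -mulrDl -/M -N2 divff //.
  by rewrite expf_neq0.
rewrite /sqd /gamC /= -/m1 -/m2 -/N.
set q := N^-1.
have Nq : N * q = 1 by rewrite /q divff.
have q1 : 1 <= q by nra.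
have e1 : (x.1 - m1 * q) ^+ 2 + (x.2 - m2 * q) ^+ 2 = 2 - 2 * q * (x.1 * m1 + x.2 * m2).
  have hMq : M * q ^+ 2 = 1 by rewrite -N2 -exprMn Nq expr1n.
  transitivity ((x.1 ^+ 2 + x.2 ^+ 2) - 2 * q * (x.1 * m1 + x.2 * m2) + M * q ^+ 2).
    by rewrite /M; ring.
  by rewrite hMq hx; ring.
rewrite e1 xm.
have w0 := sqd_ge0 x z.
have sw : s * sqd x z <= sqd x z by nra.
have a0 : 0 <= 1 - s * sqd x z / 2 by lra.
have qa : 1 - s * sqd x z / 2 <= q * (1 - s * sqd x z / 2) by nra.
lra.
Qed.

Lemma path_ex (X : set (pt R)) (hX : X = @circle R \/ X = @unit_interval R) x d :
  X x -> 0 < d ->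
  exists2 eps, 0 < eps & forall z, X z -> Defs.edist x z < eps ->
  exists gam : R -> pt R,
  [/\ {within `[0, 1], continuous gam}, gam 0 = x, gam 1 = z &
      forall s, s \in `[0, 1] -> X (gam s) /\ Defs.edist x (gam s) < d].
Proof.
move=> Xx hd; case: hX => ->{X} in Xx *.
  have hm0 : 0 < Num.min d 1 by rewrite lt_min hd ltr01.
  exists (Num.min d 1) => // z Xz; rewrite edist_lt // => hz.
  have hp := @circle_path x z d Xx Xz hd hz.
  exists (gamC x z); split.
  - apply: continuous_in_subspaceT => s; rewrite inE /= in_itv /= => hs.
    by apply: gamC_cont; case: (hp s hs).
  - move: Xx; rewrite /circle /gamC /nrm /= !lin0 => ->.
    by rewrite sqrtr1 !divr1; case: (x).
  - move: Xz; rewrite /circle /gamC /nrm /= !lin1 => ->.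
    by rewrite sqrtr1 !divr1; case: (z).
  - move=> s; rewrite in_itv /= => hs; case: (hp s hs) => _ h1 h2.
    by split => //; rewrite edist_lt.
exists d => // z Xz; rewrite edist_lt // => hz.
exists (gamI x z); split.
- by apply: continuous_subspaceT; apply: gamI_cont.
- by rewrite /gamI !lin0; case: (x).
- by rewrite /gamI !lin1; case: (z).
- move=> s; rewrite in_itv /= => /andP [s0 s1].
  move: Xx Xz hz; rewrite /unit_interval /= /sqd /gamI /lin.
  move=> [/andP [x0 x1] x2] [/andP [z0 z1] z2] hz.
  rewrite edist_lt // /sqd /= x2 z2.
  have h1 : 0 <= (1 - s) * x.1 by rewrite mulr_ge0 // subr_ge0.
  have h2 : 0 <= s * z.1 by rewrite mulr_ge0.
  have h3 : 0 <= (1 - s) * (1 - x.1) by rewrite mulr_ge0 // subr_ge0.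
  have h4 : 0 <= s * (1 - z.1) by rewrite mulr_ge0 // subr_ge0.
  have -> : x.1 + s * (z.1 - x.1) = (1 - s) * x.1 + s * z.1 by ring.
  have e : 1 - ((1 - s) * x.1 + s * z.1) = (1 - s) * (1 - x.1) + s * (1 - z.1) by ring.
  split; first (split; [apply/andP; split; [exact: addr_ge0 | rewrite -subr_ge0 e; exact: addr_ge0] | ring]).
  rewrite x2 z2 in hz.
  have : (s * (z.1 - x.1)) ^+ 2 <= (z.1 - x.1) ^+ 2.
    rewrite exprMn; apply: ler_piMl; first exact: sqr_ge0.
    by rewrite expr_le1.
  have -> : (x.1 - ((1 - s) * x.1 + s * z.1)) ^+ 2 + (0 - (0 + s * (0 - 0))) ^+ 2 =
    (s * (z.1 - x.1)) ^+ 2 by ring.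
  have e2 : (x.1 - z.1) ^+ 2 + (0 - 0) ^+ 2 = (z.1 - x.1) ^+ 2 by ring.
  rewrite e2 in hz.
  by move=> h; apply: le_lt_trans h hz.
Qed.


Definition Ne (e : R) : nat := (Num.truncn (8 / e)).+2.
Definition cg (e : R) (j : nat) : R := -1 + j%:R * (e / 4).

Lemma grid e lo hi : 0 < e -> -1 <= lo -> hi <= 1 -> lo + e / 2 <= hi ->
  exists j : 'I_(Ne e), lo <= cg e j <= hi.
Proof.
move=> he l1 h1 lh.
have he4 : 0 < e / 4 by rewrite divr_gt0.
have y0 : 0 <= (lo + 1) * 4 / e.
  by apply: divr_ge0; [apply: mulr_ge0; lra | exact: ltW].
have [T1 T2] := andP (truncn_itv y0).
set T := Num.truncn ((lo + 1) * 4 / e) in T1 T2.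
have TN : (T <= Num.truncn (8 / e))%N.
  apply: le_truncn; rewrite ler_pM2r ?invr_gt0 //; lra.
have jN : (T.+1 < Ne e)%N by rewrite /Ne ltnS.
exists (Ordinal jN); rewrite /cg /=.
have eT : (lo + 1) * 4 / e = (lo + 1) / (e / 4) by field; lra.
rewrite eT in T1 T2.
rewrite ler_pdivlMr // in T1.
rewrite ltr_pdivrMr // in T2.
rewrite -natr1 mulrDl mul1r.
apply/andP; split; lra.
Qed.

Lemma between e u v : 0 < e -> -1 <= u <= 1 -> -1 <= v <= 1 -> e / 2 <= `|u - v| ->
  exists j : 'I_(Ne e), (u <= cg e j <= v) \/ (v <= cg e j <= u).
Proof.
move=> he /andP [u0 u1] /andP [v0 v1] huv.
case: (leP u v) => h.
  have [j hj] : exists j : 'I_(Ne e), u <= cg e j <= v.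
    have hn : `|u - v| = v - u by rewrite distrC ger0_norm // subr_ge0.
    rewrite hn in huv; apply: grid => //; lra.
  by exists j; left.
have [j hj] : exists j : 'I_(Ne e), v <= cg e j <= u.
  have hn : `|u - v| = u - v by rewrite ger0_norm // subr_ge0 ltW.
  rewrite hn in huv; apply: grid => //; lra.
by exists j; right.
Qed.

Lemma ivt01 (phi : R -> R) v : {within `[0, 1], continuous phi} ->
  (phi 0 <= v <= phi 1) \/ (phi 1 <= v <= phi 0) ->
  exists2 t, t \in `[0, 1] & phi t = v.
Proof.
move=> hc hv; apply: IVT => //.
case: hv => /andP [h1 h2]; apply/andP; split.
- by rewrite ge_min h1.
- by rewrite le_max h2 orbT.
- by rewrite ge_min h1 orbT.
- by rewrite le_max h2.
Qed.

Lemma sgn_eq (a b : R) : a ^+ 2 = b ^+ 2 -> (a == 0, 0 < a) = (b == 0, 0 < b) -> a = b.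
Proof.
move=> hab [h0 hp].
have : (a - b) * (a + b) = 0 by rewrite -subr_sqr hab subrr.
move/eqP; rewrite mulf_eq0 => /orP [/eqP|/eqP] h; first by apply/eqP; rewrite -subr_eq0 h.
have eb : b = - a by apply: (addrI a); rewrite h subrr.
rewrite eb in h0 hp.
case: (ltgtP a 0) => ha.
- by move: hp; rewrite oppr_gt0 ha (lt_gtF ha).
- by move: hp; rewrite oppr_gt0 ha (lt_gtF ha).
- by rewrite eb ha oppr0.
Qed.



Lemma relint_open (X A : set (pt R)) : rel_open X (rel_interior X A).
Proof.
split; first by move=> y [].
apply/seteqP; split => y; last by move=> [_ [h _]].
move=> [Xy [Ay [r hr hb]]].
have hr2 : 0 < r / 2 by rewrite divr_gt0.
split => //; split; first by split => //; split => //; exists r.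
exists (r / 2) => // w Xw hyw.
split => //; split.
  apply: hb => //; apply: lt_trans hyw _; lra.
exists (r / 2) => // v Xv hwv.
apply: hb => //; exact: (@edist_tri y w v r hr hyw hwv).
Qed.

Lemma edist_refl (p : pt R) : Defs.edist p p = 0.
Proof. by rewrite /Defs.edist !subrr expr0n /= addr0 sqrtr0. Qed.

Section Dyn.
Variables (X : set (pt R)) (hX : X = @circle R \/ X = @unit_interval R).
Variables (f g : pt R -> pt R) (hf : homeomorphism_on X f g).

Lemma Xbd p : X p -> -1 <= p.1 <= 1 /\ -1 <= p.2 <= 1.
Proof.
case: hX => -> /=.
  rewrite /circle /= => hp.
  have h1 := sqr_ge0 p.1; have h2 := sqr_ge0 p.2.
  split; apply/andP; split; nra.
rewrite /unit_interval /= => -[/andP [h1 h2] ->].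
split; apply/andP; split; lra.
Qed.

Lemma fX p : X p -> X (f p).
Proof. by case: hf => h _ _ _ _; apply: h. Qed.

Lemma iterX n p : X p -> X (iter n f p).
Proof. by move=> Xp; elim: n => //= n IH; apply: fX. Qed.

Lemma iter_inj n p : X p -> iter n g (iter n f p) = p.
Proof.
case: hf => fX' _ gf _ _.
elim: n p => // n IH p Xp.
rewrite iterSr iterS gf ?IH //; exact: iterX.
Qed.

Lemma iter_cont n : {within X, continuous (iter n f)}.
Proof.
case: hf => fX' _ _ _ [cf _].
elim: n => [|n IH].
  by apply: continuous_subspaceT => x; exact: cvg_id.
have -> : iter n.+1 f = f \o iter n f by apply: funext => p; rewrite iterS.
apply: wcomp => //; move=> a Xa; exact: iterX.
Qed.

Definition crd (i : bool) (p : pt R) := if i then p.1 else p.2.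
Definition ocrd (i : bool) (p : pt R) := if i then p.2 else p.1.

Lemma crd_cont i : continuous (crd i).
Proof. by case: i; [exact: fst_cont | exact: snd_cont]. Qed.

Definition code e (k : bool * 'I_(Ne e) * (bool * bool)) (p : pt R) : Prop :=
  [/\ X p, crd k.1.1 p = cg e k.1.2, (ocrd k.1.1 p == 0, 0 < ocrd k.1.1 p) = k.2 &
      (X = @unit_interval R -> k.1.1 = true)].

Lemma code_uniq e k p q : code e k p -> code e k q -> p = q.
Proof.
case: k => [[i j] s] [Xp cp sp ip] [Xq cq sq iq] /=.
simpl in *.
case: hX => HX.
  rewrite HX /circle /= in Xp Xq.
  case: p Xp cp sp => p1 p2 /= Xp cp sp; case: q Xq cq sq => q1 q2 /= Xq cq sq.
  case: i ip iq cp sp cq sq => /= _ _ cp sp cq sq.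
    have e1 : p1 = q1 by rewrite cp cq.
    have e2 : p2 = q2.
      apply: sgn_eq; last by rewrite sp sq.
      by apply: (addrI (p1 ^+ 2)); rewrite Xp e1 Xq.
    by rewrite e1 e2.
  have e1 : p2 = q2 by rewrite cp cq.
  have e2 : p1 = q1.
    apply: sgn_eq; last by rewrite sp sq.
    by apply: (addIr (p2 ^+ 2)); rewrite Xp e1 Xq.
  by rewrite e1 e2.
have it := ip HX; subst i.
rewrite HX /unit_interval /= in Xp Xq.
case: p Xp cp sp => p1 p2 /= [_ ->] cp sp; case: q Xq cq sq => q1 q2 /= [_ ->] cq sq.
by rewrite cp cq.
Qed.

Section Wand.
Variable U : set (pt R).
Hypothesis UX : U `<=` X.
Hypothesis wand : forall n y, (1 <= n)%N -> U y -> ~ U (iter n f y).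

Lemma noret n m u v : (n < m)%N -> U u -> U v -> iter n f u = iter m f v -> False.
Proof.
move=> nm Uu Uv h.
have em : m = (n + (m - n))%N by rewrite subnKC // ltnW.
rewrite em iterD in h.
have := congr1 (iter n g) h.
rewrite (iter_inj n u (UX _ Uu)) (iter_inj n _ (iterX (m - n) v (UX _ Uv))).
move=> hu; apply: (wand (m - n) v) => //.
  by rewrite subn_gt0.
by rewrite -hu.
Qed.

Lemma prox x d : X x -> 0 < d -> (forall y, X y -> Defs.edist x y < d -> U y) ->
  exists2 eps, 0 < eps & forall z, X z -> Defs.edist x z < eps ->
  forall e, 0 < e -> exists n : nat, Defs.edist (iter n f x) (iter n f z) < e.
Proof.
move=> Xx hd hU.
have [eps he hpath] := @path_ex X hX x d Xx hd.
exists eps => // z Xz hxz e he0.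
have [gam [gc g0 g1 gs]] := hpath z Xz hxz.
case: (pselect (exists n : nat, Defs.edist (iter n f x) (iter n f z) < e)) => // hno.
exfalso.
have hge : forall n, e ^+ 2 <= sqd (iter n f x) (iter n f z).
  move=> n; rewrite leNgt -edist_lt //; apply/negP => h; apply: hno; exists n.
  by [].
have key : forall n : nat, exists ku : (bool * 'I_(Ne e) * (bool * bool)) * pt R,
    [/\ U ku.2 & code e ku.1 (iter n f ku.2)].
  move=> n.
  set a := iter n f x; set b := iter n f z.
  have Xa : X a := iterX n x Xx.
  have Xb : X b := iterX n z Xz.
  have ha := hge n; rewrite -/a -/b /sqd in ha.
  pose i := (e / 2 <= `|a.1 - b.1|).
  have he2 : 0 < e / 2 by rewrite divr_gt0.
  have hi : e / 2 <= `|crd i a - crd i b|.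
    rewrite /crd; case: ifP => // /negbT; rewrite -ltNge => h1.
    rewrite leNgt; apply/negP => h2.
    have n1 : 0 <= `|a.1 - b.1| := normr_ge0 _.
    have n2 : 0 <= `|a.2 - b.2| := normr_ge0 _.
    rewrite -(real_normK (num_real (a.1 - b.1))) -(real_normK (num_real (a.2 - b.2))) in ha.
    move: (`|a.1 - b.1|) (`|a.2 - b.2|) n1 n2 h1 h2 ha => t1 t2 n1 n2 h1 h2 ha.
    have : t1 ^+ 2 + t2 ^+ 2 < e ^+ 2.
      have q1 : t1 ^+ 2 < (e / 2) ^+ 2 by rewrite ltrXn2r // ?nnegrE // ltW.
      have q2 : t2 ^+ 2 < (e / 2) ^+ 2 by rewrite ltrXn2r // ?nnegrE // ltW.
      have : (e / 2) ^+ 2 + (e / 2) ^+ 2 <= e ^+ 2.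
        rewrite -subr_ge0; have -> : e ^+ 2 - ((e / 2) ^+ 2 + (e / 2) ^+ 2) = 2 * (e / 2) ^+ 2 by field.
        by rewrite mulr_ge0 // sqr_ge0.
      lra.
    by rewrite ltNge ha.
  have hint : X = @unit_interval R -> i = true.
    move=> HX; rewrite /i.
    move: Xa Xb; rewrite HX /unit_interval /= => -[_ a2] [_ b2].
    rewrite a2 b2 subrr expr0n /= addr0 in ha.
    rewrite leNgt; apply/negP => h2.
    rewrite -(real_normK (num_real (a.1 - b.1))) in ha.
    have n1 : 0 <= `|a.1 - b.1| := normr_ge0 _.
    move: (`|a.1 - b.1|) n1 h2 ha => t1 n1 h2 ha.
    have : t1 ^+ 2 < e ^+ 2 by rewrite ltrXn2r // ?nnegrE ?ltW //; apply: lt_trans h2 _; lra.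
    by rewrite ltNge ha.
  have bd : forall p, X p -> -1 <= crd i p <= 1.
    by move=> p /Xbd [h1 h2]; rewrite /crd; case: (i).
  have [j hj] := @between e _ _ he0 (bd _ Xa) (bd _ Xb) hi.
  pose phi := fun s => crd i (iter n f (gam s)).
  have phic : {within `[0, 1], continuous phi}.
    have c1 : {within `[0, 1], continuous (iter n f \o gam)}.
      apply: wcomp => //; last exact: iter_cont.
      by move=> s hs; case: (gs s hs).
    have := @wcomp R _ R `[0, 1] setT (iter n f \o gam) (crd i) (fun _ _ => I) c1.
    by apply; apply: continuous_subspaceT; exact: crd_cont.
  have [t ht phit] : exists2 t, t \in `[0, 1] & phi t = cg e j.
    apply: ivt01 => //.
    by rewrite /phi g0 g1 -/a -/b.
  have [Xt dt] := gs t ht.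
  exists ((i, j, (ocrd i (iter n f (gam t)) == 0, 0 < ocrd i (iter n f (gam t)))), gam t).
  split => /=; first exact: hU.
  by split => //; exact: iterX.
have [F hF] := choice key.
pose h := fun k : 'I_(#|{: bool * 'I_(Ne e) * (bool * bool)}|.+1) => (F k).1.
have : ~~ injectiveb h.
  apply/negP => /injectiveP /leq_card; rewrite card_ord ltnn.
  by [].
case/injectivePn => a [b] ab hab.
have [Ua ca] := hF a; have [Ub cb] := hF b.
rewrite /h in hab; rewrite hab in ca.
have heq := @code_uniq e _ _ _ ca cb.
case: (ltngtP a b) => hlt.
- exact: (@noret _ _ _ _ hlt Ua Ub heq).
- exact: (@noret _ _ _ _ hlt Ub Ua (esym heq)).
- by move: ab; rewrite (val_inj hlt) eqxx.
Qed.
End Wand.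

End Dyn.
End S.

Theorem lemma3p5 (R : realType) (X : set (pt R))
  (hX : X = @circle R \/ X = @unit_interval R)
  (f g : pt R -> pt R) (hf : homeomorphism_on X f g)
  (mu : probability (pt R) R) (hmuX : mu X = 1%E)
  (hdist : inner_distal X f g mu) :
  measure_support X mu `<=` nonwandering X f.
Proof.
move=> x [Xx hsup]; split => // U UX hU.
case: (pselect (exists n : nat, (1 <= n)%N /\ exists2 y, U y & U (iter n f y))) => // hnot.
exfalso.
have wand : forall n y, (1 <= n)%N -> U y -> ~ U (iter n f y).
  by move=> n y n1 Uy Uf; apply: hnot; exists n; split => //; exists y.
case: hU => _ [Ux [d hd hball]].
have [eps he hp] := @prox R X hX f g hf U UX wand x d Xx hd hball.
set W := rel_interior X (proximal_cell X f g x).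
have Wo : rel_open X W := @relint_open R X _.
have Wx : W x.
  split => //; split.
    split => // e he'; exists 0%Z => /=; by rewrite edist_refl.
  exists eps => // z Xz hz; split => // e he'.
  have [n hn] := hp z Xz hz e he'.
  by exists (Posz n).
have := hsup W Wo Wx.
by rewrite /W (hdist x Xx) ltxx.
Qed.
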